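(* Let $\{\boldsymbol y^{TSLP}_n\}_{n\in\mathcal T}$, $\{u^{TSLP}_n\}_{n\in\mathcal T\setminus\{1\}}$ be the values of the $\boldsymbol y$- and $u$-variables in an optimal solution of the linear programming relaxation of the two-stage model (integrality of $\boldsymbol x$ dropped). Define $\boldsymbol x^{MS}_1=\lceil\boldsymbol B_{t_1}\boldsymbol y^{TSLP}_1\rceil$, $\boldsymbol x^{MS}_n=\max_{m\in\mathcal P(n)}\lceil\boldsymbol B_{t_m}\boldsymbol y^{TSLP}_m\rceil-\max_{m\in\mathcal P(a(n))}\lceil\boldsymbol B_{t_m}\boldsymbol y^{TSLP}_m\rceil$ ($n\ne1$), $\eta^{MS}_n=\max_{m\in\mathcal C(n)}\{\boldsymbol f_{t_m}^{\mathsf T}\sum_{l\in\mathcal P(m)}\boldsymbol x^{MS}_l+\boldsymbol c_{t_m}^{\mathsf T}\boldsymbol y^{TSLP}_m-u^{TSLP}_m\}$ ($n\notin\mathcal L$), $\boldsymbol x^{TS}_1=\boldsymbol B_{t_1}\boldsymbol y^{TSLP}_1$, $\boldsymbol x^{TS}_n=\max_{m\in\mathcal P(n)}\max_{l\in\mathcal T_{t_m}}\boldsymbol B_{t_l}\boldsymbol y^{TSLP}_l-\max_{m\in\mathcal P(a(n))}\max_{l\in\mathcal T_{t_m}}\boldsymbol B_{t_l}\boldsymbol y^{TSLP}_l$ ($n\ne1$), $\eta^{TS}_n=\max_{m\in\mathcal C(n)}\{\boldsymbol f_{t_m}^{\mathsf T}\sum_{l\in\mathcal P(m)}\boldsymbol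 x^{TS}_l+\boldsymbol c_{t_m}^{\mathsf T}\boldsymbol y^{TSLP}_m-u^{TSLP}_m\}$ ($n\notin\mathcal L$). Then $$\mathrm{VMS}_R\ge\mathrm{VMS}_R^{LB1}:=\boldsymbol f_{t_1}^{\mathsf T}\big(\boldsymbol B_{t_1}\boldsymbol y^{TSLP}_1-\lceil\boldsymbol B_{t_1}\boldsymbol y^{TSLP}_1\rceil\big)+\sum_{n\in\mathcal T\setminus\{1\}}p_n(1-\lambda_{t_n})\boldsymbol f_{t_n}^{\mathsf T}\Big(\max_{m\in\mathcal P(n)}\max_{l\in\mathcal T_{t_m}}\boldsymbol B_{t_l}\boldsymbol y^{TSLP}_l-\max_{m\in\mathcal P(n)}\lceil\boldsymbol B_{t_m}\boldsymbol y^{TSLP}_m\rceil\Big)+\sum_{n\in\mathcal T\setminus\mathcal L}p_n\lambda_{t_n+1}\big(\eta^{TS}_n-\eta^{MS}_n\big).$$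
   Context: Setting. Fix integers $T\ge 2$ (periods), $M\ge1$ (facilities), $N\ge1$ (customer sites). For each period $t$: maintenance costs $f_{ti}\ge 0$ forming $\boldsymbol f_t\in\mathbb R^M$; operational costs $c_{tij}\ge0$ forming $\boldsymbol c_t\in\mathbb R^{MN}$; capacities $h_{ti}>0$. Vectors $\boldsymbol y\in\mathbb R^{MN}$ are indexed by pairs $(i,j)$; $(\boldsymbol A_t\boldsymbol y)_j=\sum_{i=1}^M y_{ij}$ defines $\boldsymbol A_t$ and $(\boldsymbol B_t\boldsymbol y)_i=\frac1{h_{ti}}\sum_{j=1}^N y_{ij}$ defines $\boldsymbol B_t$. Ceilings and maxima of vectors are componentwise. Scenario tree: a finite rooted tree with node set $\mathcal T$, root $1$, all root-to-leaf paths having $T$ nodes; $\mathcal T_t$ nodes at depth $t$, $t_n$ the period of $n$, $\mathcal L=\mathcal T_T$ the leaves, $a(n)$ the parent of $n\ne1$, $\mathcal C(n)$ the children of $n$, $\mathcal P(n)$ the nodes on the root-to-$n$ path (inclusive). Probabilities $p_n>0$ with $\sum_{n\in\mathcal T_t}p_n=1$ and $\sum_{m\in\mathcal C(n)}p_m=p_n$ ($n\notin\mathcal L$); demands $\boldsymbol d_n\in\mathbb R^N_{\ge0}$. Risk parameters $\lambda_t\in[0,1]$, $\alpha_t\in(0,1)$, $t=2,\ldots,T$. $\tilde{\boldsymbol f}_n=\boldsymbol f_{t_n}$ if $n=1$, else $(1-\lambda_{t_n})\boldsymbol f_{t_n}$; $\tilde{\boldsymbol c}_n=\boldsymbol c_{t_n}$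 if $n=1$, else $(1-\lambda_{t_n})\boldsymbol c_{t_n}$; $\tilde\lambda_n=0$ if $n\in\mathcal L$, else $\lambda_{t_n+1}$; $\tilde\alpha_n=0$ if $n=1$, else $\lambda_{t_n}/(1-\alpha_{t_n})$. Multistage model: $z^{MS}_R=\min\sum_{n\in\mathcal T}p_n\big(\tilde{\boldsymbol f}_n^{\mathsf T}\sum_{m\in\mathcal P(n)}\boldsymbol x_m+\tilde{\boldsymbol c}_n^{\mathsf T}\boldsymbol y_n+\tilde\lambda_n\eta_n+\tilde\alpha_nu_n\big)$ over $\boldsymbol x_n\in\mathbb Z^M_+$, $\boldsymbol y_n\in\mathbb R^{MN}_+$ ($n\in\mathcal T$), $\eta_n\in\mathbb R$ ($n\notin\mathcal L$), $u_n\ge0$ ($n\ne1$), subject to $\boldsymbol A_{t_n}\boldsymbol y_n=\boldsymbol d_n$, $\boldsymbol B_{t_n}\boldsymbol y_n\le\sum_{m\in\mathcal P(n)}\boldsymbol x_m$ ($n\in\mathcal T$) and $u_n+\eta_{a(n)}\ge\boldsymbol f_{t_n}^{\mathsf T}\sum_{m\in\mathcal P(n)}\boldsymbol x_m+\boldsymbol c_{t_n}^{\mathsf T}\boldsymbol y_n$ ($n\ne1$). Two-stage model: the multistage model plus the constraints $\boldsymbol x_m=\boldsymbol x_n$ for all $m,n\in\mathcal T_t$, $t=1,\ldots,T$; optimal value $z^{TS}_R$. $\mathrm{VMS}_R:=z^{TS}_R-z^{MS}_R$. *)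

(* Defs.v *)
From HB Require Import structures.
From mathcomp Require Import all_boot all_order all_algebra.
Set Implicit Arguments. Unset Strict Implicit. Unset Printing Implicit Defensive.
Import Order.TTheory GRing.Theory Num.Theory.
Local Open Scope ring_scope.

(* Maximum of F over a finite set S (meaningful for S nonempty; 0 if S = set0). *)
Definition fmax (R : realDomainType) (T : finType) (S : {set T}) (F : T -> R) : R :=
  match [pick m in S] with
  | Some m0 => \big[Num.max/F m0]_(m in S) F m
  | None => 0
  end.

Definition ceilR (R : archiRealFieldType) (x : R) : R := (Num.ceil x)%:~R.

Section Model.
Variable R : archiRealFieldType.
Variables (T M N : nat).
Variable Node : finType.
Variable root : Node.
Variable par : Node -> Node.      (* a(n), parent (only used for n <> root) *)
Variable dep : Node -> nat.       (* t_n, period / depth of node n (root has 1) *)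
Variable p : Node -> R.
Variable d : Node -> 'I_N -> R.
Variable f : nat -> 'I_M -> R.
Variable c : nat -> 'I_M -> 'I_N -> R.
Variable h : nat -> 'I_M -> R.
Variables lam alpha : nat -> R.

Definition scenario_tree : Prop :=
  dep root = 1%N /\
  (forall n, n != root -> dep n = (dep (par n)).+1) /\
  (forall n, (dep n <= T)%N) /\
  (forall n, (dep n < T)%N -> exists m, m != root /\ par m = n) /\
  (forall n, 0 < p n) /\
  (forall k, (1 <= k <= T)%N -> \sum_(n | dep n == k) p n = 1) /\
  (forall n, (dep n < T)%N -> \sum_(m | (m != root) && (par m == n)) p m = p n).

(* m \in P(n): m lies on the root-to-n path (inclusive) *)
Definition inP (m n : Node) : bool :=
  (dep m <= dep n)%N && (iter (dep n - dep m) par n == m).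
Definition Pset (n : Node) : {set Node} := [set m | inP m n].
Definition children (n : Node) : {set Node} := [set m | (m != root) && (par m == n)].
Definition level (k : nat) : {set Node} := [set l | dep l == k].
Definition isleaf (n : Node) : bool := dep n == T.

Definition cum (x : Node -> 'I_M -> R) (n : Node) (i : 'I_M) : R :=
  \sum_(m | inP m n) x m i.
Definition Av (y : 'I_M -> 'I_N -> R) (j : 'I_N) : R := \sum_(i < M) y i j.
Definition Bv (k : nat) (y : 'I_M -> 'I_N -> R) (i : 'I_M) : R :=
  (h k i)^-1 * \sum_(j < N) y i j.
Definition fdot (k : nat) (v : 'I_M -> R) : R := \sum_(i < M) f k i * v i.
Definition cdot (k : nat) (y : 'I_M -> 'I_N -> R) : R :=
  \sum_(i < M) \sum_(j < N) c k i j * y i j.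

Definition ftil (n : Node) (i : 'I_M) : R :=
  if n == root then f (dep n) i else (1 - lam (dep n)) * f (dep n) i.
Definition ctil (n : Node) (i : 'I_M) (j : 'I_N) : R :=
  if n == root then c (dep n) i j else (1 - lam (dep n)) * c (dep n) i j.
Definition lamtil (n : Node) : R := if isleaf n then 0 else lam (dep n).+1.
Definition alphatil (n : Node) : R :=
  if n == root then 0 else lam (dep n) / (1 - alpha (dep n)).

Definition objective (x : Node -> 'I_M -> R) (y : Node -> 'I_M -> 'I_N -> R)
    (eta u : Node -> R) : R :=
  \sum_(n : Node) p n * (\sum_(i < M) ftil n i * cum x n i
      + \sum_(i < M) \sum_(j < N) ctil n i j * y n i j
      + lamtil n * eta n + alphatil n * u n).

Definition common_cons (x : Node -> 'I_M -> R) (y : Node -> 'I_M -> 'I_N -> R)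
    (eta u : Node -> R) : Prop :=
  [/\ (forall n i j, 0 <= y n i j),
      (forall n, n != root -> 0 <= u n),
      (forall n j, Av (y n) j = d n j),
      (forall n i, Bv (dep n) (y n) i <= cum x n i) &
      (forall n, n != root ->
         u n + eta (par n) >= fdot (dep n) (cum x n) + cdot (dep n) (y n))].

Definition nonanticipative (x : Node -> 'I_M -> R) : Prop :=
  forall m n, dep m = dep n -> forall i, x m i = x n i.

Definition feas_MS x y eta u : Prop :=
  common_cons x y eta u /\ (forall n i, x n i \is a Num.int /\ 0 <= x n i).
Definition feas_TS x y eta u : Prop :=
  feas_MS x y eta u /\ nonanticipative x.
Definition feas_TSLP x y eta u : Prop :=
  [/\ common_cons x y eta u, (forall n i, 0 <= x n i) & nonanticipative x].

Definition opt_value (feas : (Node -> 'I_M -> R) -> (Node -> 'I_M -> 'I_N -> R) ->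
    (Node -> R) -> (Node -> R) -> Prop) (z : R) : Prop :=
  (forall x y eta u, feas x y eta u -> z <= objective x y eta u) /\
  (forall e, 0 < e -> exists x y eta u, feas x y eta u /\ objective x y eta u < z + e).

Section Heuristic.
Variables (yL : Node -> 'I_M -> 'I_N -> R) (uL : Node -> R).

Definition MC (n : Node) (i : 'I_M) : R :=
  fmax (Pset n) (fun m => ceilR (Bv (dep m) (yL m) i)).
Definition MT (n : Node) (i : 'I_M) : R :=
  fmax (Pset n) (fun m => fmax (level (dep m)) (fun l => Bv (dep l) (yL l) i)).

Definition xMS (n : Node) (i : 'I_M) : R :=
  if n == root then ceilR (Bv (dep root) (yL root) i) else MC n i - MC (par n) i.
Definition xTS (n : Node) (i : 'I_M) : R :=
  if n == root then Bv (dep root) (yL root) i else MT n i - MT (par n) i.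

Definition etaMS (n : Node) : R :=
  fmax (children n) (fun m => fdot (dep m) (cum xMS m) + cdot (dep m) (yL m) - uL m).
Definition etaTS (n : Node) : R :=
  fmax (children n) (fun m => fdot (dep m) (cum xTS m) + cdot (dep m) (yL m) - uL m).

Definition VMS_LB1 : R :=
  fdot (dep root) (fun i => Bv (dep root) (yL root) i - ceilR (Bv (dep root) (yL root) i))
  + \sum_(n | n != root) p n * (1 - lam (dep n)) * fdot (dep n) (fun i => MT n i - MC n i)
  + \sum_(n | ~~ isleaf n) p n * lam (dep n).+1 * (etaTS n - etaMS n).
End Heuristic.
End Model.

(* Main.v *)
Set Warnings "-all".
Require Import Defs.
From HB Require Import structures.
From mathcomp Require Import all_boot all_order all_algebra.
From mathcomp Require Import zify ring lra.
Set Warnings "-all".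
Import Order.TTheory GRing.Theory Num.Theory.
Local Open Scope ring_scope.

Section Fmax.
Variables (R : realDomainType) (I : finType).

Lemma fmax_ge (S : {set I}) (F : I -> R) m : m \in S -> F m <= fmax S F.
Proof.
rewrite /fmax; case: pickP => [m0 Hm0|H] Hm; last by rewrite H in Hm.
exact: le_bigmax_cond.
Qed.

Lemma fmax_le (S : {set I}) (F : I -> R) m B : m \in S ->
  (forall k, k \in S -> F k <= B) -> fmax S F <= B.
Proof.
rewrite /fmax; case: pickP => [m0 Hm0|H] Hm HB; last by rewrite H in Hm.
apply/bigmax_leP; split; [exact: HB| exact: HB].
Qed.

Lemma fmax_int (R' : archiRealFieldType) (S : {set I}) (F : I -> R') :
  (forall k, k \in S -> F k \is a Num.int) -> fmax S F \is a Num.int.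
Proof.
rewrite /fmax; case: pickP => [m0 Hm0|H] HF; last by [].
apply: (big_ind (fun x => x \is a Num.int)) => //; first exact: HF.
by move=> a b Ha Hb; rewrite /Num.max; case: ifP.
Qed.

Lemma fmax_eq (S : {set I}) (F : I -> R) a : S = [set a] -> fmax S F = F a.
Proof.
move=> ->; apply/le_anti/andP; split.
  by apply: (@fmax_le _ _ a) => [|k]; rewrite ?inE // => /eqP ->.
by apply: fmax_ge; rewrite inE.
Qed.
End Fmax.
Arguments fmax_ge {R I S} F {m}.
Arguments fmax_le {R I S F} m {B}.
Arguments fmax_int {I R' S F}.
Arguments fmax_eq {R I S F a}.

Section Tree.
Variables (R : archiRealFieldType) (M : nat) (Node : finType) (root : Node)
  (par : Node -> Node) (dep : Node -> nat).
Hypothesis hroot : dep root = 1%N.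
Hypothesis hpar : forall n, n != root -> dep n = (dep (par n)).+1.

Lemma dep_ge1 n : (1 <= dep n)%N.
Proof. by case: (eqVneq n root) => [->|/hpar ->]; rewrite ?hroot. Qed.

Lemma dep1 n : dep n = 1%N -> n = root.
Proof.
case: (eqVneq n root) => // /hpar -> [] H.
by have := dep_ge1 (par n); rewrite H.
Qed.

Lemma inP_rec k n :
  inP par dep k n = (k == n) || ((n != root) && inP par dep k (par n)).
Proof.
rewrite /inP; case: (eqVneq n root) => [->|nr] /=.
  rewrite hroot orbF; apply/andP/eqP => [[H1 /eqP <-]|->].
    have := dep_ge1 k => H2.
    have e : (1 - dep k = 0)%N by lia.
    by rewrite e.
  by rewrite hroot subnn.
rewrite (hpar n nr).
case: (ltngtP (dep k) (dep (par n)).+1) => H.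
- have -> : k == n = false.
    by apply/negbTE/eqP => E; move: H; rewrite E (hpar n nr) ltnn.
  rewrite /=. have H' : (dep k <= dep (par n))%N by [].
  by rewrite H' subSn // iterSr.
- have -> : k == n = false.
    by apply/negbTE/eqP => E; move: H; rewrite E (hpar n nr) ltnn.
  have h2 : (dep k <= dep (par n))%N = false by lia.
  by rewrite h2.
- by rewrite H subnn /= eq_sym ltnn orbF.
Qed.

Lemma Pset_root : Pset par dep root = [set root].
Proof. by apply/setP => k; rewrite !inE inP_rec eqxx /= orbF. Qed.

Lemma inP_self n : inP par dep n n.
Proof. by rewrite inP_rec eqxx. Qed.

Lemma inP_par k n : n != root -> inP par dep k (par n) -> inP par dep k n.
Proof. by move=> nr H; rewrite inP_rec nr H orbT. Qed.


Lemma cum_rec (x : Node -> 'I_M -> R) n i :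
  cum par dep x n i = x n i + (if n == root then 0 else cum par dep x (par n) i).
Proof.
rewrite /cum (bigD1 n) ?inP_self //=; congr (_ + _).
case: (eqVneq n root) => [->|nr].
  apply: big1 => k /andP[]; rewrite inP_rec eqxx /= orbF => /eqP ->.
  by rewrite eqxx.
apply: eq_bigl => k; rewrite inP_rec nr /=.
case: (eqVneq k n) => [->|kn] /=; last by rewrite andbT.
by rewrite /inP (hpar n nr) ltnn.
Qed.

Lemma dep_ind (P : Node -> Prop) :
  (forall n, (forall m, (dep m < dep n)%N -> P m) -> P n) -> forall n, P n.
Proof.
move=> IH n; have [k Hk] : exists k, (dep n <= k)%N by exists (dep n).
elim: k n Hk => [|k IHk] n Hk.
  by have := dep_ge1 n; lia.
apply: IH => m Hm; apply: IHk; lia.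
Qed.

Lemma cum_tele (x g : Node -> 'I_M -> R) :
  (forall i, x root i = g root i) ->
  (forall n i, n != root -> x n i = g n i - g (par n) i) ->
  forall n i, cum par dep x n i = g n i.
Proof.
move=> h0 h1; elim/dep_ind => n IH i.
rewrite cum_rec; case: (eqVneq n root) => [->|nr]; first by rewrite h0 addr0.
by rewrite IH ?(hpar n nr) // h1 // subrK.
Qed.

Lemma cum_nonanti (x : Node -> 'I_M -> R) : nonanticipative dep x ->
  forall l m i, dep l = dep m -> cum par dep x l i = cum par dep x m i.
Proof.
move=> hx; elim/dep_ind => l IH m i E.
rewrite (cum_rec x l) (cum_rec x m) (hx l m E).
case: (eqVneq l root) => [lr|lr].
  have mr : m = root by apply: dep1; rewrite -E lr hroot.
  by rewrite mr eqxx.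
case: (eqVneq m root) => [mr|mr].
  exfalso; have := dep_ge1 (par l); move: E; rewrite mr hroot (hpar l lr).
  by case=> ->.
congr (_ + _); apply: IH; first by rewrite (hpar l lr).
by move: E; rewrite (hpar l lr) (hpar m mr) => -[].
Qed.

Lemma cum_mono (x : Node -> 'I_M -> R) : (forall n i, 0 <= x n i) ->
  forall n k i, inP par dep k n -> cum par dep x k i <= cum par dep x n i.
Proof.
move=> hx; elim/dep_ind => n IH k i; rewrite inP_rec.
case: (eqVneq k n) => [->|kn] //= /andP[nr Hk].
rewrite [X in _ <= X]cum_rec (negbTE nr).
apply: le_trans (IH _ _ _ _ Hk) _; first by rewrite (hpar n nr).
by rewrite lerDr.
Qed.

Lemma child_in n : n != root -> n \in children root par (par n).
Proof. by move=> nr; rewrite inE nr eqxx. Qed.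

Lemma level1 : level dep 1 = [set root].
Proof.
apply/setP => k; rewrite !inE; apply/eqP/eqP => [/dep1 //|->]; exact: hroot.
Qed.

Lemma Pset_par n : n != root -> {subset Pset par dep (par n) <= Pset par dep n}.
Proof. by move=> nr k; rewrite !inE; exact: inP_par. Qed.

End Tree.

Arguments dep_ge1 {Node root par dep}.
Arguments dep1 {Node root par dep}.
Arguments inP_rec {Node root par dep}.
Arguments Pset_root {Node root par dep}.
Arguments inP_self {Node root par dep}.
Arguments inP_par {Node root par dep}.
Arguments cum_rec {R M Node root par dep}.
Arguments dep_ind {Node root par dep}.
Arguments cum_tele {R M Node root par dep}.
Arguments cum_nonanti {R M Node root par dep}.
Arguments cum_mono {R M Node root par dep}.
Arguments child_in {Node root par}.
Arguments level1 {Node root par dep}.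
Arguments Pset_par {Node root par dep}.

Theorem corollary1 (R : archiRealFieldType) (T M N : nat)
  (hT : (2 <= T)%N) (hM : (1 <= M)%N) (hN : (1 <= N)%N)
  (Node : finType) (root : Node) (par : Node -> Node) (dep : Node -> nat)
  (p : Node -> R) (d : Node -> 'I_N -> R)
  (f : nat -> 'I_M -> R) (c : nat -> 'I_M -> 'I_N -> R) (h : nat -> 'I_M -> R)
  (lam alpha : nat -> R)
  (htree : scenario_tree T root par dep p)
  (hf : forall k i, (1 <= k <= T)%N -> 0 <= f k i)
  (hc : forall k i j, (1 <= k <= T)%N -> 0 <= c k i j)
  (hh : forall k i, (1 <= k <= T)%N -> 0 < h k i)
  (hd : forall n j, 0 <= d n j)
  (hlam : forall k, (2 <= k <= T)%N -> 0 <= lam k <= 1)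
  (halpha : forall k, (2 <= k <= T)%N -> 0 < alpha k < 1)
  (zMS zTS : R)
  (hzMS : opt_value T root par dep p f c lam alpha
            (feas_MS root par dep d f c h) zMS)
  (hzTS : opt_value T root par dep p f c lam alpha
            (feas_TS root par dep d f c h) zTS)
  (xL : Node -> 'I_M -> R) (yL : Node -> 'I_M -> 'I_N -> R) (etaL uL : Node -> R)
  (hLPfeas : feas_TSLP root par dep d f c h xL yL etaL uL)
  (hLPopt : forall x y eta u, feas_TSLP root par dep d f c h x y eta u ->
     objective T root par dep p f c lam alpha xL yL etaL uL
       <= objective T root par dep p f c lam alpha x y eta u) :
  zTS - zMS >= VMS_LB1 T root par dep p f c h lam yL uL.
Proof.
case: htree => [hroot [hpar [hdepT [hchild [hp [hlev hsum]]]]]].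
case: hLPfeas => [[hy hu hA hB heta] hxL hna].
have hdep n : (1 <= dep n <= T)%N by rewrite (dep_ge1 hroot hpar) ?hdepT.
have hBge0 n i : 0 <= Bv h (dep n) (yL n) i.
  rewrite /Bv; apply: mulr_ge0; first by rewrite invr_ge0 ltW ?hh.
  by apply: sumr_ge0 => j _; apply: hy.
have hMCroot i : MC par dep h yL root i = ceilR (Bv h (dep root) (yL root) i).
  by rewrite /MC (Pset_root hroot hpar) (fmax_eq (erefl _)).
have hMTroot i : MT par dep h yL root i = Bv h (dep root) (yL root) i.
  rewrite /MT (Pset_root hroot hpar) (fmax_eq (erefl _)) hroot.
  by rewrite (level1 hroot hpar) (fmax_eq (erefl _)) hroot.
have hMCtele : forall n i, cum par dep (xMS root par dep h yL) n i = MC par dep h yL n i.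
  apply: (cum_tele hroot hpar) => [i|n i nr]; first by rewrite /xMS eqxx hMCroot.
  by rewrite /xMS (negbTE nr).
have hMTtele : forall n i, cum par dep (xTS root par dep h yL) n i = MT par dep h yL n i.
  apply: (cum_tele hroot hpar) => [i|n i nr]; first by rewrite /xTS eqxx hMTroot.
  by rewrite /xTS (negbTE nr).
have hMC_ge n i : ceilR (Bv h (dep n) (yL n) i) <= MC par dep h yL n i.
  by apply: (fmax_ge (fun m => ceilR (Bv h (dep m) (yL m) i))); rewrite inE (inP_self hroot hpar).
have hMC_mono n i : n != root -> MC par dep h yL (par n) i <= MC par dep h yL n i.
  move=> nr; apply: (fmax_le (par n)); first by rewrite inE (inP_self hroot hpar).
  move=> k Hk; apply: fmax_ge; exact: (Pset_par hroot hpar n).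
have hMT_le n i : MT par dep h yL n i <= cum par dep xL n i.
  apply: (fmax_le n); first by rewrite inE (inP_self hroot hpar).
  move=> m; rewrite inE => Hm.
  apply: (fmax_le m); first by rewrite inE.
  move=> l; rewrite inE => /eqP Hl.
  apply: le_trans (hB l i) _.
  rewrite (cum_nonanti hroot hpar _ hna _ _ _ Hl).
  exact: (cum_mono hroot hpar _ hxL).
have hMCint n i : MC par dep h yL n i \is a Num.int.
  by apply: fmax_int => k _; exact: intr_int.
have hfeas : feas_MS root par dep d f c h (xMS root par dep h yL) yL
               (etaMS root par dep f c h yL uL) uL.
  split; first split => //.
  - move=> n i; rewrite hMCtele; apply: le_trans (hMC_ge n i).
    exact: ceil_ge.
  - move=> n nr.
    have := fmax_ge (fun m => fdot f (dep m) (cum par dep (xMS root par dep h yL) m)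
                 + cdot c (dep m) (yL m) - uL m) (child_in (par:=par) n nr).
    move=> H.
    rewrite /etaMS; lra.
  - move=> n i; rewrite /xMS; case: eqP => [_|/eqP nr].
      split; first exact: intr_int.
      exact: le_trans (hBge0 root i) (ceil_ge _).
    split; first by apply: rpredB.
    by rewrite subr_ge0; apply: hMC_mono.
have hzMS_le := hzMS.1 _ _ _ _ hfeas.
have hzTS_ge : objective T root par dep p f c lam alpha xL yL etaL uL <= zTS.
  apply/ler_addgt0Pr => e e0.
  have [x [y [eta [u [[[hfx hint] hnx] hlt]]]]] := hzTS.2 e e0.
  apply: le_trans (ltW hlt).
  apply: hLPopt; split => // n i; exact: (hint n i).2.
set FL := objective T root par dep p f c lam alpha xL yL etaL uL.
set FM := objective T root par dep p f c lam alpha (xMS root par dep h yL) yL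
               (etaMS root par dep f c h yL uL) uL.
suff key : VMS_LB1 T root par dep p f c h lam yL uL <= FL - FM by move: hzMS_le hzTS_ge; rewrite -/FL -/FM; lra.
have Ediff : FL - FM =
  \sum_n (p n * \sum_i ftil root dep f lam n i
                  * (cum par dep xL n i - MC par dep h yL n i))
  + \sum_n (p n * lamtil T dep lam n
                  * (etaL n - etaMS root par dep f c h yL uL n)).
  rewrite /FL /FM /objective -big_split -sumrB /=; apply: eq_bigr => n _.
  have E : \sum_i ftil root dep f lam n i
                  * (cum par dep xL n i - MC par dep h yL n i) =
     \sum_i ftil root dep f lam n i * cum par dep xL n i -
     \sum_i ftil root dep f lam n i * cum par dep (xMS root par dep h yL) n i.
    by rewrite -sumrB; apply: eq_bigr => i _; rewrite hMCtele mulrBr.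
  rewrite E; ring.
rewrite Ediff /VMS_LB1; apply: lerD.
  rewrite [X in _ <= X](bigD1 root) //=; apply: lerD.
    have p1 : p root = 1.
      have := hlev 1%N; rewrite (@big_pred1 _ _ _ _ root) => [->//|]; first by lia.
      by move=> n; rewrite /=; apply/eqP/eqP => [/(dep1 hroot hpar)|->].
    rewrite p1 mul1r /fdot /ftil eqxx; apply: ler_sum => i _.
    rewrite hMCroot; apply: ler_wpM2l; first by apply: hf; rewrite hroot; lia.
    by rewrite lerD2r; exact: hB.
  apply: ler_sum => n nr.
  have hd2 : (2 <= dep n <= T)%N.
    by have := dep_ge1 hroot hpar (par n); have := hdepT n; rewrite (hpar n nr); lia.
  rewrite /ftil (negbTE nr) /fdot -mulrA; apply: ler_wpM2l; first exact: ltW.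
  rewrite mulr_sumr; apply: ler_sum => i _; rewrite mulrA; apply: ler_wpM2l.
    apply: mulr_ge0; last by apply: hf; lia.
    by have /andP[_ H1] := hlam _ hd2; rewrite subr_ge0.
  by rewrite lerD2r; exact: hMT_le.
rewrite [X in _ <= X](bigID (fun n => ~~ isleaf T dep n)) /=.
rewrite [X in _ <= _ + X]big1 ?addr0; last first.
  by move=> n; rewrite negbK => Hl; rewrite /lamtil Hl mulr0 mul0r.
apply: ler_sum => n Hn.
have hlt : (dep n < T)%N by move: Hn (hdepT n); rewrite /isleaf; lia.
rewrite /lamtil (negbTE Hn); apply: ler_wpM2l.
  apply: mulr_ge0; first exact: ltW.
  by have /andP[->] := hlam (dep n).+1 (ltac:(have := dep_ge1 hroot hpar n; lia)).
rewrite lerD2r.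
have [m0 [m0r pm0]] := hchild n hlt.
rewrite /etaTS; apply: (fmax_le m0); first by rewrite inE m0r pm0 eqxx.
move=> k; rewrite inE => /andP[kr /eqP pk].
have := heta k kr; rewrite pk => Hk.
have Hf : fdot f (dep k) (cum par dep (xTS root par dep h yL) k)
          <= fdot f (dep k) (cum par dep xL k).
  rewrite /fdot; apply: ler_sum => i _; apply: ler_wpM2l; first by apply: hf; exact: hdep.
  by rewrite hMTtele; exact: hMT_le.
lra.
Qed.
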